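(* Let \(K\rightarrowtail L\twoheadrightarrow P\) be an extension of complete, torsionfree bornological \(V\)-modules and assume that \(P\) is algebraically torsionfree. Then \(K'\rightarrowtail L'\twoheadrightarrow P'\) is an extension of complete bornological \(V\)-modules as well. In addition, \(L\) is nuclear if and only if both \(K\) and \(P\) are nuclear.
   Context: Let \(V\) be a complete discrete valuation ring with uniformiser \(\pi\). A bornology on a set is a collection of subsets (called bounded) containing all finite subsets and closed under finite unions and under taking subsets. A bornological \(V\)-module is a \(V\)-module with a bornology such that every bounded subset is contained in a bounded \(V\)-submodule; bounded maps send bounded sets to bounded sets. It is complete if every bounded subset is contained in a bounded, \(\pi\)-adically complete \(V\)-submodule, and torsionfree if it is torsionfree as a \(V\)-module and \(\pi^{-1}S=\{x:\pi x\in S\}\) is bounded for every bounded \(S\). An extension \(K\rightarrowtail L\twoheadrightarrow P\) is a sequence of bounded \(V\)-linear maps, exact as \(V\)-modules, in which \(K\to L\) is a bornological embedding (a subset of \(K\) is bounded iff its image in \(L\) is bounded) and \(L\to P\) is a bornological quotient map (every bounded subset of \(P\) is the image of a bounded subset of \(L\)). A subset \(S\) of \(M\) is compactoid if there is a bounded \(V\)-submodule \(T\subseteq M\) with \(S\subseteq T\) such that for every \(n\in\mathbb N\) there is a finite set \(F_n\subseteq T\) with \(S\subseteq VF_n+\pi^nT\). \(M'\) denotes \(M\) with the bornology of compactoid subsets; \(M\) is nuclear if all its bounded subsets are compactoid. *)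

(* Defs.v *)
From HB Require Import structures.
From mathcomp Require Import all_boot all_order all_algebra.
From mathcomp Require Import boolp classical_sets cardinality.
Set Implicit Arguments. Unset Strict Implicit. Unset Printing Implicit Defensive.
Import GRing.Theory.
Local Open Scope ring_scope.
Local Open Scope classical_set_scope.

Definition is_cdvr (V : idomainType) (pi : V) : Prop :=
  [/\ pi != 0, pi \notin GRing.unit,
   (forall a : V, a != 0 ->
      exists (u : V) (n : nat), u \is a GRing.unit /\ a = u * pi ^+ n),
   (forall a : V, (forall n : nat, exists b, a = pi ^+ n * b) -> a = 0) &
   (forall x : nat -> V,
      (forall n : nat, exists b, x n.+1 - x n = pi ^+ n * b) ->
      exists y, forall n : nat, exists b, y - x n = pi ^+ n * b)].

Definition submodule (V : pzRingType) (M : lmodType V) (T : set M) : Prop :=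
  [/\ T 0, (forall x y, T x -> T y -> T (x + y)) &
      (forall (a : V) x, T x -> T (a *: x))].

(* T (a submodule) is pi-adically complete: T -> lim T / pi^n T is bijective,
   i.e. pi-adically separated and every pi-adic Cauchy sequence converges. *)
Definition pi_complete (V : pzRingType) (pi : V) (M : lmodType V) (T : set M)
  : Prop :=
  (forall x, T x -> (forall n : nat, exists t, T t /\ x = pi ^+ n *: t) -> x = 0)
  /\
  (forall x : nat -> M, (forall n, T (x n)) ->
     (forall n : nat, exists t, T t /\ x n.+1 - x n = pi ^+ n *: t) ->
     exists y, T y /\ forall n : nat, exists t, T t /\ y - x n = pi ^+ n *: t).

Definition bornology (X : Type) (B : set (set X)) : Prop :=
  [/\ (forall S : set X, finite_set S -> B S),
      (forall S1 S2, B S1 -> B S2 -> B (S1 `|` S2)) &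
      (forall S1 S2, S1 `<=` S2 -> B S2 -> B S1)].

Definition born_module (V : pzRingType) (M : lmodType V) (B : set (set M))
  : Prop :=
  bornology B /\
  (forall S, B S -> exists T, [/\ B T, submodule T & S `<=` T]).

Definition complete_born (V : pzRingType) (pi : V) (M : lmodType V)
  (B : set (set M)) : Prop :=
  born_module B /\
  (forall S, B S -> exists T, [/\ B T, submodule T, pi_complete pi T & S `<=` T]).

Definition torsionfree_mod (V : pzRingType) (M : lmodType V) : Prop :=
  forall (a : V) (x : M), a *: x = 0 -> a = 0 \/ x = 0.

Definition torsionfree_born (V : pzRingType) (pi : V) (M : lmodType V)
  (B : set (set M)) : Prop :=
  torsionfree_mod M /\ (forall S, B S -> B [set x | S (pi *: x)]).

Definition bounded_map (X Y : Type) (BX : set (set X)) (BY : set (set Y))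
  (f : X -> Y) : Prop :=
  forall S, BX S -> BY (f @` S).

Definition extension (V : pzRingType) (K L P : lmodType V)
  (BK : set (set K)) (BL : set (set L)) (BP : set (set P))
  (f : {linear K -> L}) (g : {linear L -> P}) : Prop :=
  [/\ bounded_map BK BL f, bounded_map BL BP g,
      injective f, (forall p : P, exists l : L, g l = p) &
      (forall l : L, g l = 0 <-> exists k : K, f k = l)] /\
  (forall S : set K, BK S <-> BL (f @` S)) /\
  (forall S : set P, BP S -> exists S' : set L, BL S' /\ S = g @` S').

(* compactoid subsets: the bornology of M' *)
Definition compactoid (V : pzRingType) (pi : V) (M : lmodType V)
  (B : set (set M)) : set (set M) :=
  fun S => exists T : set M, [/\ B T, submodule T, S `<=` T &
    forall n : nat, exists F : seq M, (forall x, x \in F -> T x) /\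
      S `<=` [set z | exists (c : 'I_(size F) -> V) (t : M),
                 T t /\ z = \sum_(i < size F) c i *: F`_i + pi ^+ n *: t]].

Definition nuclear (V : pzRingType) (pi : V) (M : lmodType V)
  (B : set (set M)) : Prop :=
  forall S, B S -> compactoid pi B S.

(* Main.v *)
Require Import Defs.
From HB Require Import structures.
From mathcomp Require Import all_boot all_order all_algebra.
From mathcomp Require Import boolp classical_sets cardinality.
Set Implicit Arguments. Unset Strict Implicit. Unset Printing Implicit Defensive.
Import GRing.Theory.
Local Open Scope ring_scope.
Local Open Scope classical_set_scope.

Section Span.
Variables (V : idomainType) (M : lmodType V).

Definition span (F : seq M) : set M := fun x =>
  exists c : 'I_(size F) -> V, x = \sum_(i < size F) c i *: F`_i.

Lemma span_nil x : span [::] x <-> x = 0.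
Proof. split; first by case=> c ->; rewrite big_ord0.
by move=> ->; exists (fun _ => 0); rewrite big_ord0. Qed.

Lemma span_cons a F x : span (a :: F) x <-> exists c y, span F y /\ x = c *: a + y.
Proof.
split.
  case=> c ->; rewrite big_ord_recl /=.
  exists (c ord0), (\sum_(i < size F) c (lift ord0 i) *: F`_i); split => //.
  by exists (fun i => c (lift ord0 i)).
case=> c [y [[d ->] ->]].
exists (fun i : 'I_(size F).+1 => if unlift ord0 i is Some j then d j else c).
rewrite big_ord_recl /= unlift_none; congr (_ + _).
by apply: eq_bigr => i _; rewrite liftK.
Qed.

Lemma span0 F : span F 0.
Proof. by exists (fun _ => 0); rewrite big1 // => i _; rewrite scale0r. Qed.

Lemma spanD F x y : span F x -> span F y -> span F (x + y).
Proof.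
case=> c -> [d ->]; exists (fun i => c i + d i).
by rewrite -big_split /=; apply: eq_bigr => i _; rewrite scalerDl.
Qed.

Lemma spanZ F a x : span F x -> span F (a *: x).
Proof.
case=> c ->; exists (fun i => a * c i).
by rewrite scaler_sumr; apply: eq_bigr => i _; rewrite scalerA.
Qed.

Lemma spanN F x : span F x -> span F (- x).
Proof. by move=> h; rewrite -scaleN1r; apply: spanZ. Qed.

Lemma spanB F x y : span F x -> span F y -> span F (x - y).
Proof. by move=> hx hy; apply: spanD => //; apply: spanN. Qed.

Lemma span_submodule F : submodule (span F).
Proof. split; [exact: span0 | exact: spanD | exact: spanZ]. Qed.

Lemma span_mem F x : x \in F -> span F x.
Proof.
elim: F => // a F IH; rewrite inE => /orP [/eqP ->|/IH h]; apply/span_cons.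
  by exists 1, 0; split; [exact: span0 | rewrite scale1r addr0].
by exists 0, x; split => //; rewrite scale0r add0r.
Qed.

Lemma span_sub (T : set M) F x : submodule T -> (forall y, y \in F -> T y) ->
  span F x -> T x.
Proof.
case=> T0 TD TZ; elim: F x => [x _ /span_nil -> //|a F IH x hF /span_cons].
case=> c [y [hy ->]]; apply: TD; first by apply: TZ; apply: hF; rewrite inE eqxx.
by apply: IH => // z hz; apply: hF; rewrite inE hz orbT.
Qed.

Lemma span_mono F G x : (forall y, y \in F -> span G y) -> span F x -> span G x.
Proof. by move=> h; apply: span_sub => //; exact: span_submodule. Qed.

Lemma span_catl F G x : span F x -> span (F ++ G) x.
Proof. by apply: span_mono => y hy; apply: span_mem; rewrite mem_cat hy. Qed.

Lemma span_catr F G x : span G x -> span (F ++ G) x.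
Proof. by apply: span_mono => y hy; apply: span_mem; rewrite mem_cat hy orbT. Qed.

End Span.

Section SpanMap.
Variables (V : idomainType) (M N : lmodType V) (h : {linear M -> N}).

Lemma span_map F x : span F x -> span (map h F) (h x).
Proof.
elim: F x => [x /span_nil ->|a F IH x /span_cons [c [y [hy ->]]]].
  by rewrite linear0; apply/span_nil.
by apply/span_cons; exists c, (h y); split; [exact: IH | rewrite linearD linearZ].
Qed.

Lemma span_map_inv F y : span (map h F) y -> exists x, span F x /\ h x = y.
Proof.
elim: F y => [y /span_nil ->|a F IH y /span_cons [c [z [/IH [x [hx <-]] ->]]]].
  by exists 0; split; [apply/span_nil | rewrite linear0].
exists (c *: a + x); split; last by rewrite linearD linearZ.
by apply/span_cons; exists c, x.
Qed.

End SpanMap.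
Lemma zmod_id (Z : zmodType) (z A B C w : Z) : z - A - (w - C) = (z - B - w) - (A - B - C).
Proof.
rewrite !opprB !addrA (addrAC _ C B) (addrAC _ (- w) B) subrK.
by rewrite [LHS]addrAC [in LHS](addrAC z) [LHS]addrAC.
Qed.

Section Sub.
Variables (V : idomainType) (M : lmodType V).
Implicit Types T : set M.

Lemma sub0 T : submodule T -> T 0. Proof. by case. Qed.
Lemma subD T x y : submodule T -> T x -> T y -> T (x + y). Proof. by case=> _ h _; apply: h. Qed.
Lemma subZ T a x : submodule T -> T x -> T (a *: x). Proof. by case=> _ _ h; apply: h. Qed.
Lemma subN T x : submodule T -> T x -> T (- x).
Proof. by move=> h hx; rewrite -scaleN1r; apply: subZ. Qed.
Lemma subB T x y : submodule T -> T x -> T y -> T (x - y).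
Proof. by move=> h hx hy; apply: subD => //; apply: subN. Qed.

End Sub.

Lemma well_min (P : nat -> Prop) : (exists m, P m) -> exists m0, P m0 /\ forall m, P m -> (m0 <= m)%N.
Proof.
move=> h; have h' : exists m, `[< P m >] by case: h => m ?; exists m; apply/asboolP.
case: (ex_minnP h') => m /asboolP Pm hmin; exists m; split => // k Pk; apply: hmin; exact/asboolP.
Qed.

Lemma noeth (V : idomainType) (pi : V) (M : lmodType V) (N Q : set M) (F : seq M) :
  is_cdvr pi -> submodule N -> submodule Q ->
  exists G : seq M, (forall x, x \in G -> N x /\ exists w, span F w /\ Q (x - w)) /\
  forall z, N z -> (exists w, span F w /\ Q (z - w)) ->
     exists y q, [/\ span G y, N q, Q q & z = y + q].
Proof.
case=> pi0 piu hval _ _ sN sQ.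
elim: F => [|a F [G' [hG' IH]]].
  exists [::]; split => // z Nz [w [/span_nil -> Qz]]; exists 0, z; split => //.
  - exact/span_nil.
  - by rewrite subr0 in Qz.
  - by rewrite add0r.
pose I b := exists z, N z /\ exists w, span F w /\ Q (z - b *: a - w).
have IZ c b : I b -> I (c * b).
  case=> z [Nz [w [hw Qz]]]; exists (c *: z); split; first exact: subZ.
  exists (c *: w); split; first exact: spanZ.
  by rewrite -scalerA -!scalerBr; apply: subZ.
have hG'1 x : x \in G' -> N x /\ exists w, span (a :: F) w /\ Q (x - w).
  move=> /hG' [Nx [w [hw Qx]]]; split => //; exists w; split => //.
  by apply/span_cons; exists 0, w; rewrite scale0r add0r.
have decomp z w : span (a :: F) w -> Q (z - w) -> exists b w1, [/\ span F w1, w = b *: a + w1 & Q (z - b *: a - w1)].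
  move=> /span_cons [b [w1 [h1 ->]]] Qz; exists b, w1; split => //.
  by rewrite opprD addrA in Qz.
case: (pselect (exists m, I (pi ^+ m))) => [hex|hno].
  case: (well_min hex) => m0 [[y0 [Ny0 [w0 [hw0 Qy0]]]] hmin].
  exists (y0 :: G'); split.
    move=> x; rewrite inE => /orP [/eqP ->|/hG'1 //]; split => //.
    exists (pi ^+ m0 *: a + w0); split; first by apply/span_cons; exists (pi ^+ m0), w0.
    by rewrite opprD addrA.
  move=> z Nz [w [hw Qz]]; case: (decomp z w hw Qz) => b [w1 [hw1 ew Qb]].
  have [c hc] : exists c, b = c * pi ^+ m0.
    case: (eqVneq b 0) => [->|bn0]; first by exists 0; rewrite mul0r.
    case: (hval b bn0) => u [m [uu hb]].
    have Im : I (pi ^+ m).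
      have -> : pi ^+ m = u^-1 * b by rewrite hb mulrA mulVr // mul1r.
      by apply: IZ; exists z; split => //; exists w1.
    have le := hmin m Im.
    exists (u * pi ^+ (m - m0)); rewrite hb -mulrA -exprD subnK //.
  have NQ : N (z - c *: y0) by apply: subB => //; apply: subZ.
  have QQ : Q (z - c *: y0 - (w1 - c *: w0)).
    have -> : z - c *: y0 - (w1 - c *: w0) = (z - b *: a - w1) - c *: (y0 - pi ^+ m0 *: a - w0).
      by rewrite hc -scalerA !scalerBr -(zmod_id z (c *: y0) (c *: (pi ^+ m0 *: a)) (c *: w0) w1).
    by apply: subB => //; apply: subZ.
  case: (IH (z - c *: y0) NQ) => [|y [q [hy Nq Qq ez]]].
    by exists (w1 - c *: w0); split => //; apply: spanB => //; apply: spanZ.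
  exists (c *: y0 + y), q; split => //.
    by apply/span_cons; exists c, y.
  by rewrite -addrA -ez addrC subrK.
exists G'; split => //.
move=> z Nz [w [hw Qz]]; case: (decomp z w hw Qz) => b [w1 [hw1 ew Qb]].
have b0 : b = 0.
  apply/eqP; apply/negPn/negP => bn0.
  case: (hval b bn0) => u [m [uu hb]]; apply: hno; exists m.
  have -> : pi ^+ m = u^-1 * b by rewrite hb mulrA mulVr // mul1r.
  by apply: IZ; exists z; split => //; exists w1.
apply: IH => //; exists w1; split => //.
by rewrite b0 scale0r subr0 in Qb.
Qed.

Section Cpt.
Variables (V : idomainType) (pi : V) (M : lmodType V) (B : set (set M)).

Definition cpt (S T : set M) : Prop :=
  [/\ B T, submodule T, S `<=` T & forall n : nat, exists F : seq M,
     (forall x, x \in F -> T x) /\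
     forall z, S z -> exists w t, [/\ span F w, T t & z = w + pi ^+ n *: t]].

Lemma compactoidE S : compactoid pi B S <-> exists T, cpt S T.
Proof.
split; case=> T [BT sT ST h]; exists T; split => // n; case: (h n) => F [hF hS];
  exists F; split => // z /hS.
  by case=> c [t [Tt ->]]; exists (\sum_(i < size F) c i *: F`_i), t; split => //; exists c.
by case=> w [t [[c ->] Tt ->]]; exists c, t.
Qed.

Lemma cpt_sub S S' T : S' `<=` S -> cpt S T -> cpt S' T.
Proof.
move=> hS [BT sT ST h]; split => //; first by move=> x /hS /ST.
by move=> n; case: (h n) => F [hF hz]; exists F; split => // z /hS /hz.
Qed.

Lemma cpt_enlarge S T T' : B T' -> submodule T' -> T `<=` T' -> cpt S T -> cpt S T'.
Proof.
move=> BT' sT' TT' [BT sT ST h]; split => //; first by move=> x /ST /TT'.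
move=> n; case: (h n) => F [hF hz]; exists F; split; first by move=> x /hF /TT'.
by move=> z /hz [w [t [hw Tt ->]]]; exists w, t; split => //; apply: TT'.
Qed.

Lemma cpt_union S1 S2 T : cpt S1 T -> cpt S2 T -> cpt (S1 `|` S2) T.
Proof.
move=> [BT sT ST1 h1] [_ _ ST2 h2]; split => //; first by move=> x [/ST1|/ST2].
move=> n; case: (h1 n) => F1 [hF1 hz1]; case: (h2 n) => F2 [hF2 hz2].
exists (F1 ++ F2); split; first by move=> x; rewrite mem_cat => /orP [/hF1|/hF2].
move=> z [/hz1|/hz2] [w [t [hw Tt ->]]]; exists w, t; split => //.
  exact: span_catl. exact: span_catr.
Qed.

Definition setadd (S1 S2 : set M) : set M := [set z | exists x y, [/\ S1 x, S2 y & z = x + y]].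

Lemma cpt_add S1 S2 T : cpt S1 T -> cpt S2 T -> cpt (setadd S1 S2) T.
Proof.
move=> [BT sT ST1 h1] [_ _ ST2 h2]; split => //.
  by move=> z [x [y [/ST1 ? /ST2 ? ->]]]; apply: subD.
move=> n; case: (h1 n) => F1 [hF1 hz1]; case: (h2 n) => F2 [hF2 hz2].
exists (F1 ++ F2); split; first by move=> x; rewrite mem_cat => /orP [/hF1|/hF2].
move=> z [x [y [/hz1 [w1 [t1 [hw1 Tt1 ->]]] /hz2 [w2 [t2 [hw2 Tt2 ->]]] ->]]].
exists (w1 + w2), (t1 + t2); split.
- by apply: spanD; [apply: span_catl | apply: span_catr].
- exact: subD.
- by rewrite scalerDr addrACA.
Qed.

Lemma born_join (T1 T2 : set M) : born_module B -> B T1 -> B T2 ->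
  exists T, [/\ B T, submodule T, T1 `<=` T & T2 `<=` T].
Proof.
case=> [[_ hU _] hT] B1 B2; case: (hT _ (hU _ _ B1 B2)) => T [BT sT sub].
by exists T; split => // x hx; apply: sub; [left|right].
Qed.

Hypothesis pi0 : pi != 0.
Hypothesis hB : complete_born pi B.
Hypothesis htf : torsionfree_mod M.

Lemma scale_inj n (a b : M) : pi ^+ n *: a = pi ^+ n *: b -> a = b.
Proof.
move=> /eqP; rewrite -subr_eq0 -scalerBr => /eqP /htf [/eqP|/eqP]; last by rewrite subr_eq0 => /eqP.
by rewrite expf_eq0 (negbTE pi0) andbF.
Qed.

Lemma cpt_hull S : compactoid pi B S ->
  exists U, [/\ compactoid pi B U, submodule U, pi_complete pi U & S `<=` U].
Proof.
move=> /compactoidE [T [BT sT ST h]].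
case: (choice h) => Fn hFn.
case: hB => _ /(_ T BT) [T' [BT' sT' [sep' com'] TT']].
pose U := [set x | T' x /\ forall n, exists w t, [/\ span (Fn n) w, T' t & x = w + pi ^+ n *: t]].
have sU : submodule U.
  split.
  - split; first exact: sub0.
    by move=> n; exists 0, 0; split; [exact: span0 | exact: sub0 | rewrite scaler0 addr0].
  - move=> x y [Tx hx] [Ty hy]; split; first exact: subD.
    move=> n; case: (hx n) => w1 [t1 [h1 T1 ->]]; case: (hy n) => w2 [t2 [h2 T2 ->]].
    exists (w1 + w2), (t1 + t2); split; [exact: spanD | exact: subD | by rewrite scalerDr addrACA].
  - move=> a x [Tx hx]; split; first exact: subZ.
    move=> n; case: (hx n) => w1 [t1 [h1 T1 ->]].
    exists (a *: w1), (a *: t1); split; [exact: spanZ | exact: subZ |].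
    by rewrite scalerDr !scalerA mulrC.
exists U; split => //.
- apply/compactoidE; exists T'; split => //; first by move=> x [].
  move=> n; exists (Fn n); split; first by move=> x /(proj1 (hFn n)) /TT'.
  by move=> z [_ /(_ n)].
- split.
    by move=> x [Tx _] hx; apply: sep' => // n; case: (hx n) => t [[Tt _] ->]; exists t.
  move=> x Ux hc.
  have [y [Ty hy]] : exists y, T' y /\ forall n, exists t, T' t /\ y - x n = pi ^+ n *: t.
    apply: com' => [n|n]; first by case: (Ux n).
    by case: (hc n) => u [[Tu _] ->]; exists u.
  case: (choice hy) => tt htt; case: (choice hc) => uu huu.
  have Utt n : U (tt n).
    have key m : exists p, U p /\ pi ^+ n *: (p + pi ^+ m *: tt (n + m)%N) = pi ^+ n *: tt n.
      elim: m => [|m [p [Up IH]]].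
        by exists 0; split; [exact: sub0 | rewrite add0r expr0 scale1r addn0].
      exists (p + pi ^+ m *: uu (n + m)%N); split.
        by apply: subD => //; apply: subZ; case: (huu (n + m)%N).
      rewrite -IH !scalerDr !scalerA -!exprD addnS -addrA; congr (_ + _).
      rewrite -(proj2 (huu (n + m)%N)) -(proj2 (htt (n + m).+1)) -(proj2 (htt (n + m)%N)).
      by rewrite addrC addrA subrK.
    split; first by case: (htt n).
    move=> m; case: (key m) => p [[_ hp] /scale_inj ep].
    case: (hp m) => w [t [hw Tt ep']].
    exists w, (t + tt (n + m)%N); split => //.
      by apply: subD => //; case: (htt (n + m)%N).
    by rewrite -ep ep' scalerDr addrA.
  exists y; split.
    have -> : y = x 0%N + tt 0%N.
      by have e := proj2 (htt 0%N); rewrite expr0 scale1r in e; rewrite -e addrC subrK.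
    by apply: subD.
  by move=> n; exists (tt n); split => //; case: (htt n).
- move=> s Ss; split; first exact/TT'/ST.
  move=> n; case: (proj2 (hFn n) s Ss) => w [t [hw Tt ->]].
  by exists w, t; split => //; apply: TT'.
Qed.

Lemma compactoid_complete : complete_born pi (compactoid pi B).
Proof.
have hull := cpt_hull.
have bm : born_module B by case: hB.
split; last by move=> S /hull [U [? ? ? ?]]; exists U.
split; last by move=> S /hull [U [? ? ? ?]]; exists U.
split.
- move=> S /finite_seqP [s eS].
  have BS : B S by case: bm => [[hfin _ _] _]; apply: hfin; rewrite eS; exact: finite_seq.
  case: bm => _ /(_ S BS) [T [BT sT ST]].
  apply/compactoidE; exists T; split => // n; exists s; split.
    by move=> x xs; apply: ST; rewrite eS.
  move=> z Sz; exists z, 0; split; [apply: span_mem; move: Sz; rewrite eS // | exact: sub0 | by rewrite scaler0 addr0].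
- move=> S1 S2 /compactoidE [T1 c1] /compactoidE [T2 c2].
  case: (c1) => B1 _ _ _; case: (c2) => B2 _ _ _.
  case: (born_join bm B1 B2) => T [BT sT s1 s2].
  apply/compactoidE; exists T; apply: cpt_union.
    exact: (cpt_enlarge BT sT s1 c1).
  exact: (cpt_enlarge BT sT s2 c2).
- by move=> S1 S2 s12 /compactoidE [T c]; apply/compactoidE; exists T; apply: cpt_sub c.
Qed.

End Cpt.

Lemma compactoid_add (V : idomainType) (pi : V) (M : lmodType V) (B : set (set M)) (A C : set M) :
  born_module B -> compactoid pi B A -> compactoid pi B C -> compactoid pi B (setadd A C).
Proof.
move=> bm /compactoidE [T1 c1] /compactoidE [T2 c2].
case: (c1) => B1 _ _ _; case: (c2) => B2 _ _ _.
case: (born_join bm B1 B2) => T [BT sT s1 s2].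
apply/compactoidE; exists T; apply: cpt_add.
  exact: (cpt_enlarge BT sT s1 c1).
exact: (cpt_enlarge BT sT s2 c2).
Qed.

Lemma compactoid_bounded (V : idomainType) (pi : V) (M : lmodType V) (B : set (set M)) (S : set M) :
  bornology B -> compactoid pi B S -> B S.
Proof. by case=> _ _ hs /compactoidE [T [BT _ ST _]]; apply: hs BT. Qed.

Lemma span_map_gen (V : idomainType) (M N : lmodType V) (h : M -> N)
  (hD : forall x y, h (x + y) = h x + h y) (hZ : forall (a : V) x, h (a *: x) = a *: h x) F y :
  span (map h F) y -> exists x, span F x /\ h x = y.
Proof.
elim: F y => [y /span_nil ->|a F IH y /span_cons [c [z [/IH [x [hx <-]] ->]]]].
  by exists 0; split; [apply/span_nil | rewrite -(scale0r 0) hZ scale0r].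
exists (c *: a + x); split; last by rewrite hD hZ.
by apply/span_cons; exists c, x.
Qed.

Lemma lift_seq (M N : eqType) (h : M -> N) (Pr : M -> Prop) (G : seq N) :
  (forall x, x \in G -> exists k, Pr k /\ h k = x) ->
  exists GK, map h GK = G /\ forall k, k \in GK -> Pr k.
Proof.
elim: G => [_|a G IH hG]; first by exists [::].
case: (hG a (mem_head _ _)) => k [Pk hk].
case: IH => [x hx|GK [eGK hGK]]; first by apply: hG; rewrite inE hx orbT.
exists (k :: GK); split; first by rewrite /= hk eGK.
by move=> y; rewrite inE => /orP [/eqP ->|/hGK].
Qed.

Lemma cpt_image (V : idomainType) (pi : V) (M N : lmodType V) (BM : set (set M)) (BN : set (set N))
  (h : {linear M -> N}) S :
  bounded_map BM BN h -> compactoid pi BM S -> compactoid pi BN (h @` S).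
Proof.
move=> bh /compactoidE [T [BT sT ST hc]]; apply/compactoidE; exists (h @` T); split.
- exact: bh.
- split; first by exists 0 => //; [exact: sub0 | rewrite linear0].
  + by move=> _ _ [x Tx <-] [y Ty <-]; exists (x + y); [exact: subD | rewrite linearD].
  + by move=> a _ [x Tx <-]; exists (a *: x); [exact: subZ | rewrite linearZ].
- by move=> _ [x /ST Tx <-]; exists x.
move=> n; case: (hc n) => F [hF hz]; exists (map h F); split.
  by move=> x /mapP [y /hF Ty ->]; exists y.
move=> _ [s /hz [w [t [hw Tt ->]]] <-]; exists (h w), (h t); split.
- exact: span_map.
- by exists t.
- by rewrite linearD linearZ.
Qed.

Section Ext.
Variables (V : idomainType) (pi : V) (K L P : lmodType V)
  (BK : set (set K)) (BL : set (set L)) (BP : set (set P))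
  (f : {linear K -> L}) (g : {linear L -> P}).
Hypothesis hc : is_cdvr pi.
Hypothesis cL : complete_born pi BL.
Hypothesis cP : complete_born pi BP.
Hypothesis tfP : torsionfree_mod P.
Hypothesis hext : extension BK BL BP f g.

Let pi0 : pi != 0. Proof. by case: hc. Qed.
Let pin0 n : pi ^+ n != 0. Proof. by rewrite expf_neq0. Qed.

Lemma exactE l : g l = 0 -> exists k, f k = l.
Proof. by case: hext => [[_ _ _ _ h] _] /h. Qed.
Lemma gf k : g (f k) = 0.
Proof. by case: hext => [[_ _ _ _ h] _]; apply/h; exists k. Qed.
Lemma finj : injective f.
Proof. by case: hext => [[_ _ h _ _] _]. Qed.

Lemma cpt_pullback S : compactoid pi BL (f @` S) -> compactoid pi BK S.
Proof.
move=> /compactoidE [T [BT sT ST h]].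
pose W := [set k | T (f k)].
have BW : BK W.
  case: hext => _ [emb _]; apply/emb.
  case: cL => [[[_ _ hs] _] _]; apply: hs BT; by move=> _ [k Wk <-].
have sW : submodule W.
  split; rewrite /W /=.
  - by rewrite linear0; exact: sub0.
  - by move=> x y Tx Ty; rewrite linearD; apply: subD.
  - by move=> a x Tx; rewrite linearZ; apply: subZ.
apply/compactoidE; exists W; split => //.
  by move=> s Ss; apply: ST; exists s.
move=> n; case: (h n) => F [hF hz].
pose N := [set l : L | exists k, f k = l].
pose Q := [set l : L | exists t, T t /\ l = pi ^+ n *: t].
have sN : submodule N.
  split; first by exists 0; rewrite linear0.
  - by move=> _ _ [x <-] [y <-]; exists (x + y); rewrite linearD.
  - by move=> a _ [x <-]; exists (a *: x); rewrite linearZ.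
have sQ : submodule Q.
  split; first by exists 0; split; [exact: sub0 | rewrite scaler0].
  - move=> _ _ [x [Tx ->]] [y [Ty ->]]; exists (x + y); split; first exact: subD.
    by rewrite scalerDr.
  - move=> a _ [x [Tx ->]]; exists (a *: x); split; first exact: subZ.
    by rewrite !scalerA mulrC.
case: (noeth F hc sN sQ) => G [hG hGz].
have spT w : span F w -> T w by apply: span_sub => // y /hF.
case: (@lift_seq _ _ f W G) => [x /hG [[k <-] [w [hw [t [Tt e]]]]]|GK [eGK hGK]].
  exists k; split => //; rewrite /W /=.
  have -> : f k = w + pi ^+ n *: t by rewrite -e addrC subrK.
  by apply: (subD sT); [exact: spT hw | exact: (subZ _ sT Tt)].
exists GK; split => // s Ss.
case: (hz (f s) (ex_intro2 _ _ s Ss erefl)) => w [t [hw Tt es]].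
have Nfs : N (f s) by exists s.
have Qfs : exists w, span F w /\ Q (f s - w).
  by exists w; split => //; exists t; split => //; rewrite es addrC addKr.
case: (hGz (f s) Nfs Qfs) => y [q [hy [kq ekq] [t' [Tt' eq]] efs]].
rewrite -eGK in hy; case: (span_map_inv hy) => yk [hyk eyk].
have gt' : g t' = 0.
  have : pi ^+ n *: g t' = 0 by rewrite -linearZ -eq -ekq gf.
  by move=> /tfP [/eqP|//]; rewrite (negbTE (pin0 n)).
case: (exactE gt') => kt ekt.
exists yk, kt; split => //; first by rewrite /W /= ekt.
by apply: finj; rewrite efs linearD linearZ eyk ekt eq.
Qed.

Lemma cpt_lift S : compactoid pi BP S -> exists S', compactoid pi BL S' /\ S = g @` S'.
Proof.
move=> /compactoidE [TP [BTP sTP STP h]].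
case: (choice h) => Fn hFn.
case: hext => [[_ bg _ _ _] [_ quo]].
case: (quo TP BTP) => T' [BT' eT'].
case: (cL) => _ /(_ T' BT') [TL [BTL sTL [sepL comL] T'TL]].
have liftP x : TP x -> exists l, T' l /\ g l = x.
  by rewrite eT' => -[l Tl <-]; exists l.
have hN n : submodule [set x : P | exists t, TP t /\ x = pi ^+ n *: t].
  split; first by exists 0; split; [exact: sub0 | rewrite scaler0].
  - move=> _ _ [x [Tx ->]] [y [Ty ->]]; exists (x + y); split; first exact: subD.
    by rewrite scalerDr.
  - move=> a _ [x [Tx ->]]; exists (a *: x); split; first exact: subZ.
    by rewrite !scalerA mulrC.
have hQ : submodule [set x : P | x = 0].
  by split => //= [x y -> ->|a x ->]; rewrite ?addr0 ?scaler0.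
have hG : forall n, exists G : seq P, (forall x, x \in G -> (exists t, TP t /\ x = pi ^+ n *: t) /\
     exists w, span (Fn n ++ Fn n.+1) w /\ x - w = 0) /\
   forall z, (exists t, TP t /\ z = pi ^+ n *: t) -> (exists w, span (Fn n ++ Fn n.+1) w /\ z - w = 0) ->
     exists y q, [/\ span G y, (exists t, TP t /\ q = pi ^+ n *: t), q = 0 & z = y + q].
  by move=> n; apply: (noeth _ hc (hN n) hQ).
case: (choice hG) => Gn hGn.
pose hn n := fun l : L => g (pi ^+ n *: l).
have hGL n : exists GL, map (hn n) GL = Gn n /\ forall l, l \in GL -> T' l.
  apply: lift_seq => x /(proj1 (hGn n)) [[t [Tt ->]] _].
  case: (liftP t Tt) => l [Tl <-]; exists l; split => //.
  by rewrite /hn linearZ.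
case: (choice hGL) => GL hGLn.
case: (@lift_seq _ _ g T' (Fn 0%N)) => [x /(proj1 (hFn 0%N)) /liftP [l [? ?]]|F0L [eF0L hF0L]].
  by exists l.
pose Hs := fix Hs (N : nat) : seq L := if N is N'.+1 then Hs N' ++ GL N' else F0L.
have HsT N x : x \in Hs N -> TL x.
  elim: N x => [x /hF0L /T'TL //|N IH x /=]; rewrite mem_cat => /orP [/IH //|].
  by move=> /(proj2 (hGLn N)) /T'TL.
pose U := [set z | TL z /\ forall N, exists w t, [/\ span (Hs N) w, TL t & z = w + pi ^+ N *: t]].
exists [set z | U z /\ S (g z)]; split.
  apply/compactoidE; exists TL; split => //; first by move=> z [[]].
  move=> N; exists (Hs N); split; first exact: HsT.
  by move=> z [[_ /(_ N)]].
apply/seteqP; split; last by move=> _ [z [_ Sz] <-].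
move=> s Ss.
have ha n : exists a, span (Fn n) a /\ exists t, TP t /\ s = a + pi ^+ n *: t.
  by case: (proj2 (hFn n) s Ss) => a [t [ha Tt ->]]; exists a; split => //; exists t.
case: (choice ha) => a hA.
have hd n : exists e, span (GL n) e /\ TL e /\ g (pi ^+ n *: e) = a n.+1 - a n.
  have [d [hd1 hd2]] : exists d, d = a n.+1 - a n /\ d = a n.+1 - a n by exists (a n.+1 - a n).
  case: (proj2 (hGn n) d) => [| |y [q [hy _ q0 ed]]].
  - case: (proj2 (hA n)) => t0 [T0 e0]; case: (proj2 (hA n.+1)) => t1 [T1 e1].
    exists (t0 - pi *: t1); split; first by apply: subB => //; apply: subZ.
    have ea1 : a n.+1 = s - pi ^+ n.+1 *: t1 by rewrite e1 addrK.
    have ea0 : a n = s - pi ^+ n *: t0 by rewrite e0 addrK.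
    rewrite hd1 scalerBr scalerA -exprSr ea1 ea0.
    by rewrite opprB addrC addrA subrK.
  - exists d; split; last by rewrite subrr.
    rewrite hd1; apply: spanB; [apply: span_catr; exact: (proj1 (hA n.+1)) | apply: span_catl; exact: (proj1 (hA n))].
  - rewrite q0 addr0 in ed; rewrite -hd1 ed.
    move: hy; rewrite -(proj1 (hGLn n)) => /(span_map_gen _ _) [||e [he <-]].
    + by move=> u v; rewrite /hn scalerDr linearD.
    + by move=> c u; rewrite /hn scalerA mulrC -scalerA linearZ.
    exists e; split => //; split => //.
    apply: (span_sub sTL) he => x /(proj2 (hGLn n)); exact: T'TL.
case: (choice hd) => e he.
case: (proj1 (hA 0%N)) => c0 ea0.
have [a0L [ha0L ga0L]] : exists a0L, span F0L a0L /\ g a0L = a 0%N.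
  apply: span_map_inv; rewrite eF0L; by case: (hA 0%N).
pose x := fix xf (N : nat) : L := if N is N'.+1 then xf N' + pi ^+ N' *: e N' else a0L.
have xspan N : span (Hs N) (x N).
  elim: N => [//|N IH /=]; apply: spanD; first exact: span_catl.
  by apply: spanZ; apply: span_catr; case: (he N).
have xT N : TL (x N) by apply: (span_sub sTL) (xspan N) => y; apply: HsT.
have gx N : g (x N) = a N.
  elim: N => [//|N IH /=]; rewrite linearD IH; case: (he N) => _ [_ ->].
  by rewrite addrC subrK.
case: (comL x xT) => [N|z [Tz hz]].
  exists (e N); split; first by case: (he N) => _ [].
  by rewrite /= addrC addKr.
case: (choice hz) => tz htz.
have gzs : g z = s.
  case: (cP) => [[[_ hU hs] bmP] _].
  have : BP (TP `|` g @` TL) by apply: hU => //; apply: bg.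
  case: (cP) => _ hc' /hc' [Ts [BTs sTs [sepP _] sub]].
  apply/eqP; rewrite -subr_eq0; apply/eqP; apply: sepP.
    apply: subB => //; apply: sub; [right; by exists z | left; exact: STP].
  move=> N; case: (proj2 (hA N)) => tP [TtP es].
  case: (htz N) => Ttz ez.
  exists (g (tz N) - tP); split.
    by apply: subB => //; apply: sub; [right; exists (tz N) | left].
  have -> : z = x N + pi ^+ N *: tz N by rewrite -ez addrC subrK.
  rewrite {1}es linearD linearZ gx opprD addrACA subrr add0r scalerBr //.
exists z => //; split; last by rewrite gzs.
split => // N; exists (x N), (tz N); split => //; first by case: (htz N).
by rewrite -(proj2 (htz N)) addrC subrK.
Qed.

End Ext.

Theorem proposition4p6 (V : idomainType) (pi : V) (K L P : lmodType V)
  (BK : set (set K)) (BL : set (set L)) (BP : set (set P))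
  (f : {linear K -> L}) (g : {linear L -> P}) :
  is_cdvr pi ->
  complete_born pi BK -> complete_born pi BL -> complete_born pi BP ->
  torsionfree_born pi BK -> torsionfree_born pi BL -> torsionfree_born pi BP ->
  torsionfree_mod P ->
  extension BK BL BP f g ->
  ([/\ extension (compactoid pi BK) (compactoid pi BL) (compactoid pi BP) f g,
       complete_born pi (compactoid pi BK),
       complete_born pi (compactoid pi BL) &
       complete_born pi (compactoid pi BP)] /\
   (nuclear pi BL <-> nuclear pi BK /\ nuclear pi BP)).
Proof.
move=> hc cK cL cP [tfK _] [tfL _] [tfP _] tfP' hext.
have pi0 : pi != 0 by case: hc.
have hext' := hext.
case: hext' => [[bf bg fi gs ex] [emb quo]].
have bornL : bornology BL by case: cL => [[]].
have bmL : born_module BL by case: cL.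
split.
  split.
  - split.
    + split => //.
      * by move=> S; apply: cpt_image.
      * by move=> S; apply: cpt_image.
    + split.
        move=> S; split; first exact: cpt_image.
        exact: (cpt_pullback hc cL tfP' hext).
      exact: (cpt_lift hc cL cP hext).
  - exact: compactoid_complete.
  - exact: compactoid_complete.
  - exact: compactoid_complete.
split.
  move=> nL; split.
    by move=> S BS; apply: (cpt_pullback hc cL tfP' hext); apply: nL; apply: bf.
  move=> S /quo [S' [BS' ->]]; apply: (cpt_image bg); exact: nL.
case=> nK nP S BS.
have : compactoid pi BP (g @` S) by apply: nP; apply: bg.
case/(cpt_lift hc cL cP hext) => S' [cS' eS].
have BS' : BL S' by apply: compactoid_bounded cS'.
case: (born_join bmL BS BS') => T3 [BT3 sT3 s1 s2].
pose D := [set k | T3 (f k)].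
have BD : BK D.
  apply/emb; case: bornL => _ _ hs; apply: hs BT3; by move=> _ [k Dk <-].
have cD : compactoid pi BL (f @` D) by apply: (cpt_image bf); apply: nK.
have cA := compactoid_add bmL cS' cD.
have sub : S `<=` setadd S' (f @` D).
  move=> s Ss.
  have : (g @` S) (g s) by exists s.
  rewrite eS => -[s' S's gs'].
  have : g (s - s') = 0 by rewrite linearB gs' subrr.
  move=> /ex [k ek].
  exists s', (s - s'); split => //; last by rewrite addrC subrK.
  exists k => //; rewrite /D /= ek; apply: subB => //; [exact: s1 | exact: s2].
move: cA => /compactoidE [T c]; apply/compactoidE; exists T; exact: cpt_sub sub c.
Qed.
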